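(* $\mathcal{TC}(\mathrm{RL}_1^P)=\mathrm{FIN}$, the family of all finite languages.
   Context: A right-linear grammar is $G=(N,T,P,S)$ with rules $A\to wB$ or $A\to w$ ($A,B\in N$, $w\in T^*$). For a regular language $L$, $\mathrm{Prod}_{RL}(L)$ is the minimum of $|P|$ over all right-linear grammars generating $L$, and $\mathrm{RL}_n^P=\{L\text{ regular}:\mathrm{Prod}_{RL}(L)\le n\}$. A tree-controlled grammar is a quintuple $G=(N,T,P,S,R)$ where $(N,T,P,S)$ is a context-free grammar whose rules are all non-erasing, except that $S\to\lambda$ is allowed if $S$ does not occur on the right-hand side of any rule, and $R\subseteq (N\cup T)^*$ is a regular control language. The word of level $j$ of a derivation tree is the word of all nodes of depth $j$ read left to right. $L(G)$ consists of all $z\in T^*$ having a derivation tree with yield $z$ such that the words of all levels except the last belong to $R$. For a family $\mathcal F$ of regular languages, $\mathcal{TC}(\mathcal F)$ is the family of languages generated by tree-controlled grammars with control language in $\mathcal F$. *)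

(* Defs.v *)
From mathcomp Require Import all_boot.
Set Implicit Arguments. Unset Strict Implicit. Unset Printing Implicit Defensive.

Definition language (X : Type) := seq X -> Prop.

Definition finite_lang (X : eqType) (L : language X) : Prop :=
  exists s : seq (seq X), forall z, L z <-> z \in s.

(** * Right-linear grammars  G = (N, T, P, S)
    a rule  A -> w B  is  (A, (w, Some B));  a rule  A -> w  is  (A, (w, None)).
    P is a finite set of rules, represented by a list; |P| = size (undup P). *)
Record rlgrammar (N X : finType) := RLGrammar {
  rl_start : N;
  rl_rules : seq (N * (seq X * option N)) }.

Inductive rl_derives (N X : finType) (G : rlgrammar N X) : N -> seq X -> Prop :=
  | rl_term A w : (A, (w, None)) \in rl_rules G -> rl_derives G A w
  | rl_step A B w v : (A, (w, Some B)) \in rl_rules G ->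
      rl_derives G B v -> rl_derives G A (w ++ v).

Definition rl_lang (N X : finType) (G : rlgrammar N X) : language X :=
  fun z => rl_derives G (rl_start G) z.

(** L \in RL_n^P  iff  Prod_RL(L) <= n  iff  some right-linear grammar with at
    most n productions generates L (such an L is automatically regular). *)
Definition RL_P (n : nat) (X : finType) (L : language X) : Prop :=
  exists (N : finType) (G : rlgrammar N X),
    size (undup (rl_rules G)) <= n /\ forall z, L z <-> rl_lang G z.

(** * Tree-controlled grammars  G = (N, T, P, S, R)
    Symbols are N + T (disjoint union); a rule A -> alpha is (A, alpha). *)
Record cfgrammar (N T : finType) := CFGrammar {
  cf_start : N;
  cf_rules : seq (N * seq (N + T)) }.

Definition cf_nonerasing (N T : finType) (G : cfgrammar N T) : Prop :=
  forall A alpha, (A, alpha) \in cf_rules G -> alpha = [::] ->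
    A = cf_start G /\
    forall B beta, (B, beta) \in cf_rules G -> inl (cf_start G) \notin beta.

Inductive dtree (N T : Type) :=
  | DLeaf of T
  | DLam
  | DNode of N & seq (dtree N T).

Arguments DLam {N T}.

Definition dlabel (N T : Type) (t : dtree N T) : seq (N + T) :=
  match t with
  | DLeaf a => [:: inr a]
  | DLam => [::]
  | DNode A _ => [:: inl A]
  end.

Definition droot_sym (N T : Type) (t : dtree N T) : option (N + T) :=
  match t with
  | DLeaf a => Some (inr a)
  | DLam => None
  | DNode A _ => Some (inl A)
  end.

(** every inner node uses a rule of G: either A -> X1...Xk (k>0, children
    labelled X1..Xk), or A -> lambda (single child labelled lambda). *)
Fixpoint dvalid (N T : finType) (G : cfgrammar N T) (t : dtree N T) : bool :=
  match t with
  | DLeaf _ => true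
  | DLam => true
  | DNode A ts =>
      (if ts is [:: DLam] then (A, [::]) \in cf_rules G
       else [&& ~~ nilp ts, all (fun u => isSome (droot_sym u)) ts &
                (A, pmap (@droot_sym N T) ts) \in cf_rules G])
      && all (dvalid G) ts
  end.

Fixpoint dyield (N T : Type) (t : dtree N T) : seq T :=
  match t with
  | DLeaf a => [:: a]
  | DLam => [::]
  | DNode _ ts => flatten (map (@dyield N T) ts)
  end.

(** depth of the tree (= index of the last level) *)
Fixpoint dheight (N T : Type) (t : dtree N T) : nat :=
  match t with
  | DNode _ ts => (\max_(u <- map (@dheight N T) ts) u).+1
  | _ => 0
  end.

Fixpoint dlevel (N T : Type) (j : nat) (t : dtree N T) : seq (N + T) :=
  match j with
  | 0 => dlabel t
  | j'.+1 => match t with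
             | DNode _ ts => flatten (map (dlevel j') ts)
             | _ => [::]
             end
  end.

Definition tc_lang (N T : finType) (G : cfgrammar N T)
    (R : language (N + T)) : language T :=
  fun z => exists t : dtree N T,
    [/\ droot_sym t = Some (inl (cf_start G)), dvalid G t, dyield t = z &
        forall j, j < dheight t -> R (dlevel j t)].

Definition in_TC (F : forall X : finType, language X -> Prop)
    (T : finType) (L : language T) : Prop :=
  exists (N : finType) (G : cfgrammar N T) (R : language (N + T)),
    [/\ cf_nonerasing G, F _ R & forall z, L z <-> tc_lang G R z].

(* Main.v *)
Require Import Defs.
From mathcomp Require Import all_boot.
From mathcomp Require Import zify.
From Stdlib Require Import Classical.

Set Implicit Arguments. Unset Strict Implicit. Unset Printing Implicit Defensive.

Definition isLeaf (N T : Type) (t : dtree N T) := if t is DLeaf _ then true else false.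

Lemma pmap_leaves (N T : Type) (ts : seq (dtree N T)) : all (@isLeaf N T) ts ->
  pmap (@droot_sym N T) ts = map inr (flatten (map (@dyield N T) ts)).
Proof.
elim: ts => [|[a| |A us] r IH] //= /IH ->. by [].
Qed.

Lemma height_ge2 (N T : Type) A (ts : seq (dtree N T)) : ~~ all (@isLeaf N T) ts ->
  all (fun u => isSome (droot_sym u)) ts -> 1 < dheight (DNode A ts).
Proof.
elim: ts => [|x r IH] //=.
rewrite big_cons.
case: x => [a| |B us] /=.
- move=> /IH H /H /=. lia.
- by [].
- move=> _ _. lia.
Qed.

Lemma dvalid_node (N T : finType) (G : cfgrammar N T) A ts :
  dvalid G (DNode A ts) ->
  (ts = [:: DLam] /\ (A, [::]) \in cf_rules G) \/
  [/\ ~~ nilp ts, all (fun u => isSome (droot_sym u)) ts,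
      (A, pmap (@droot_sym N T) ts) \in cf_rules G & all (dvalid G) ts].
Proof.
move=> /andP[Hm Hall].
case: ts Hm Hall => [|[a| |B us] [|v r]] Hm Hall;
  try (by left); try (by move: Hm => /and3P[]);
  try (right; move: Hm => /and3P[h1 h2 h3]; by split).
Qed.

Lemma key (N T : finType) (G : cfgrammar N T) n : forall (t : dtree N T) A,
  dheight t <= n -> droot_sym t = Some (inl A) -> dvalid G t ->
  (forall j, j < dheight t -> dlevel j t = [:: inl A]) ->
  (A, map inr (dyield t)) \in cf_rules G.
Proof.
elim: n => [|n IH] [a| |B ts] A //.
- move=> Hh [<-] Hv Hl.
  case: (dvalid_node Hv) => [[-> HR]|[Hne Hs Hr Hva]]; first by [].
  have [Hleaf|Hnl] := boolP (all (@isLeaf N T) ts).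
    by rewrite -pmap_leaves.
  have h2 := height_ge2 B Hnl Hs.
  have L1 := Hl 1 h2.
  clear Hv.
  case: ts Hh Hne Hs Hr Hva Hnl h2 Hl L1 => [|x r] Hh //= _.
  case: x Hh => [a| |C us] Hh //=.
  case: r Hh => [|y r] Hh /=.
  + move=> _ _ Hvu _ _ Hl [eC]; subst C.
    rewrite andbT in Hvu.
    move: Hh Hl; rewrite /= big_cons big_nil => Hh Hl.
    have := IH (DNode B us) B _ erefl Hvu.
    rewrite /= cats0. apply.
    * move: Hh; rewrite /=. lia.
    * move=> j Hj. have := Hl j.+1. rewrite /= cats0. apply. move: Hj; rewrite /=. lia.
  + case: y Hh => [b| |D vs] Hh //=.
Qed.

Lemma undup_le1 (X : eqType) (s : seq X) x y :
  size (undup s) <= 1 -> x \in s -> y \in s -> x = y.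
Proof.
rewrite -(mem_undup s) -[y \in s](mem_undup s).
case: (undup s) => [|a [|b l]] //= _; rewrite !inE => /eqP -> /eqP ->. by [].
Qed.

Lemma rl_unique (N X : finType) (G : rlgrammar N X) :
  (forall r r', r \in rl_rules G -> r' \in rl_rules G -> r = r') ->
  forall A z, rl_derives G A z -> forall B z', rl_derives G B z' -> z = z'.
Proof.
move=> Hu A z H; elim: H => [A0 w Hr|A0 C w v Hr Hd IH] B z' H2;
  case: H2 => [B0 w' Hr'|B0 D w' v' Hr' Hd'].
- by case: (Hu _ _ Hr Hr') => _ ->.
- by case: (Hu _ _ Hr Hr').
- by case: (Hu _ _ Hr Hr').
- case: (Hu _ _ Hr Hr') => _ <- eCD. subst D. by rewrite (IH _ _ Hd').
Qed.

Lemma subset_fin (X : eqType) (P : seq X -> Prop) (s0 : seq (seq X)) :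
  (forall z, P z -> z \in s0) -> exists s : seq (seq X), forall z, P z <-> z \in s.
Proof.
move=> H.
suff [s Hs] : exists s : seq (seq X), forall z : seq X, (P z /\ z \in s0) <-> z \in s.
  exists s => z; rewrite -Hs; split => [Hz|[]//]; split => //; exact: H.
elim: s0 {H} => [|x s0 [s IH]].
  by exists [::] => z; split => [[]|].
case: (classic (P x)) => Px.
- exists (x :: s) => z; split.
  + rewrite in_cons; move=> [Pz /orP[/eqP ->|Hz]]; first by rewrite in_cons eqxx.
    by rewrite in_cons; apply/orP; right; apply/IH.
  + rewrite in_cons; case/orP => [/eqP ->|/IH [Pz Hz]]; first by rewrite in_cons eqxx.
    by rewrite in_cons Hz orbT.
- exists s => z; split.
  + move=> [Pz]; rewrite in_cons => /orP[/eqP eq|Hz]; first by subst z.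
    by apply/IH.
  + by move=> /IH [Pz Hz]; rewrite in_cons Hz orbT.
Qed.

Definition getr (N T : Type) (x : N + T) : option T := if x is inr a then Some a else None.

Lemma getr_map (N T : Type) (z : seq T) : pmap (@getr N T) (map inr z) = z.
Proof. by elim: z => //= a z ->. Qed.

Lemma leaves_facts (N T : finType) (G : cfgrammar N T) (z : seq T) :
  [/\ pmap (@droot_sym N T) (map (@DLeaf N T) z) = map inr z,
      flatten (map (@dyield N T) (map (@DLeaf N T) z)) = z,
      \max_(u <- map (@dheight N T) (map (@DLeaf N T) z)) u = 0,
      all (fun u => isSome (droot_sym u)) (map (@DLeaf N T) z) &
      all (dvalid G) (map (@DLeaf N T) z)].
Proof.
elim: z => [|a z [H1 H2 H3 H4 H5]]; first by rewrite big_nil.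
by split; rewrite //= ?H1 ?H2 ?H4 ?H5 // big_cons H3.
Qed.

Theorem mainTheorem5 :
  forall (T : finType) (L : language T),
    in_TC (RL_P 1) L <-> finite_lang L.
Proof.
move=> T L; split.
- case=> N [G [R [Hne [N' [G' [Hsz HR']]] HL]]].
  have Runi : forall w w', R w -> R w' -> w = w'.
    move=> w w' /HR' Hw /HR' Hw'.
    apply: (rl_unique _ Hw Hw') => r r'; exact: undup_le1.
  apply: (@subset_fin _ L [seq pmap (@getr N T) r.2 | r <- cf_rules G]).
  move=> z /HL [t [Hr Hv Hy Hl]].
  case: t Hr Hv Hy Hl => [a| |S ts] // [eS] Hv Hy Hl; subst S.
  have H0 : R [:: inl (cf_start G)] by exact: (Hl 0 erefl).
  have := @key N T G _ (DNode (cf_start G) ts) (cf_start G) (leqnn _) erefl Hv.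
  rewrite Hy => K; have {}K := K (fun j Hj => Runi _ _ (Hl j Hj) H0).
  apply/mapP; exists (cf_start G, map inr z) => //=.
  by rewrite getr_map.
- case=> s Hs.
  exists unit, (@CFGrammar unit T tt [seq (tt, map inr z) | z <- s]),
    (fun w : seq (unit + T) => w = [:: inl tt]).
  split.
  + move=> A alpha /mapP[z _ [-> ->]] _; split; first by [].
    move=> B beta /mapP[z' _ [_ ->]]; apply/mapP => [[a _]] //.
  + exists unit, (@RLGrammar unit (unit + T)%type tt [:: (tt, ([:: inl tt], None))]).
    split; first by [].
    move=> z; split.
    * by move=> ->; apply: rl_term; rewrite inE.
    * rewrite /rl_lang; case => [A w|A B w v]; rewrite inE => /eqP [] //.
  + move=> z; split.
    * move=> /Hs; case: z => [|a z] Hz.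
      -- exists (DNode tt [:: DLam]); split => //=.
         ++ rewrite andbT; apply/mapP; by exists [::].
         ++ by rewrite big_cons big_nil => -[].
      -- set G' := (@CFGrammar unit T tt [seq (tt, map inr z) | z <- s]).
         have [H1 H2 H3 H4 H5] := leaves_facts G' (a :: z).
         exists (DNode tt (map (@DLeaf unit T) (a :: z))); split => //.
         ++ change (([&& ~~ nilp (map (@DLeaf unit T) (a::z)),
                 all (fun u => isSome (droot_sym u)) (map (@DLeaf unit T) (a::z)) &
                 (tt, pmap (@droot_sym unit T) (map (@DLeaf unit T) (a::z))) \in cf_rules G'])
                 && all (dvalid G') (map (@DLeaf unit T) (a::z))).
            rewrite H5 H4 H1 andbT /=; apply/mapP; by exists (a :: z).
         ++ move=> j Hj.
            have : j < (\max_(u <- map (@dheight unit T) (map (@DLeaf unit T) (a::z))) u).+1 by [].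
            by rewrite H3; case: j {Hj}.
    * move=> [t [Hr Hv Hy Hl]]; apply/Hs.
      case: t Hr Hv Hy Hl => [b| |S ts] // [eS] Hv Hy Hl.
      case: S eS Hv Hy Hl => _ Hv Hy Hl.
      have := @key unit T _ _ (DNode tt ts) tt (leqnn _) erefl Hv.
      move=> K; have {}K := K Hl.
      move: K => /mapP[z' Hz' [eq]].
      by rewrite -Hy -(getr_map unit (dyield _)) eq getr_map.
Qed.
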